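(* Let $\alpha,\beta>0$, let $g(n)=\sum_{i=0}^k c_in^i$ be a polynomial of degree $k\ge1$ (so $c_k\ne0$), and let $x$ be a sequence (with given $x(1)$) satisfying \[x(n)=\alpha\,x(\lfloor n/2\rfloor)+\beta\,x(\lceil n/2\rceil)+g(n)\qquad(n\ge2).\] Let $d_0\coloneqq(1-\beta)x(1)-g(1)+g(0)$ and $d_1\coloneqq g(1)-(1-\beta)x(1)$. Then, as $n\to\infty$, with suitable $1$-periodic continuous functions $\Phi$ and $\Psi$: (1a) If $\alpha+\beta>2^k$ and $2^k>\max\{\alpha,\beta\}$, then $x(n)=n^{\log_2(\alpha+\beta)}\Phi(\{\log_2n\})+n^k\Psi(\{\log_2n\})+O(n^{\log_2\max\{\alpha,\beta\}})$. (1b) If $\alpha+\beta>2^k$ and $\max\{\alpha,\beta\}\ge2^k$, then $x(n)=n^{\log_2(\alpha+\beta)}\Phi(\{\log_2n\})+O\big(n^{\log_2\max\{\alpha,\beta\}}(\log n)^{[\max\{\alpha,\beta\}=2^k]}\big)$. (2) If $\alpha+\beta=2^k$, then for every $\varepsilon>0$, $x(n)=n^k(\log n)\Phi(\{\log_2n\})+n^k\Psi(\{\log_2n\})+O\big(n^{\log_2\max\{\alpha,\beta\}+[\alpha=\beta]\varepsilon}\big)$. (3) If $2^k>\alpha+\beta>2^{k-1}$, then for every $\varepsilon>0$, $x(n)=n^k\Phi(\{\log_2n\})+n^{\log_2(\alpha+\beta)}\Psi(\{\log_2n\})+O\big(n^{\log_2\max\{\alpha,\beta,2^{k-1}\}+[\max\{\alpha,\beta\}=2^{k-1}]\varepsilon}(\log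 n)^{[\max\{\alpha,\beta\}<2^{k-1}]}\big)$. (4) If $2^{k-1}\ge\alpha+\beta$, then $x(n)=n^k\Phi(\{\log_2n\})+O(n^{k-1}(\log n)^E)$, where $E\coloneqq1+[\alpha+\beta=2^{k-1}]\big([k\ge2\text{ and }c_{k-1}\ne0]+[k=1\text{ and }d_0+d_1\ne0]\big)$.
   Context: $\{z\}=z-\lfloor z\rfloor$ denotes the fractional part of a real number $z$. Iverson's bracket: $[S]=1$ if the statement $S$ is true and $0$ otherwise. The values $g(0),g(1)$ are the values of the polynomial $g$ (they do not enter the recurrence). *)

(* Defs.v *)
From Stdlib Require Import Reals Lra Lia ClassicalEpsilon.
Open Scope R_scope.

Definition iv (P : Prop) : nat :=
  if excluded_middle_informative P then 1%nat else 0%nat.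

Definition log2 (t : R) : R := ln t / ln 2.

(* fractional part {z} = z - floor z  (Stdlib: Int_part = floor) *)
Definition frac (z : R) : R := frac_part z.

Definition poly_eval (c : nat -> R) (k : nat) (t : R) : R :=
  sum_f_R0 (fun i => c i * t ^ i) k.

Definition periodic1_cont (F : R -> R) : Prop :=
  continuity F /\ forall t, F (t + 1) = F t.

Definition bigO (f b : nat -> R) : Prop :=
  exists C : R, exists N : nat, forall n : nat, (N <= n)%nat -> Rabs (f n) <= C * b n.

Definition npow (n : nat) (a : R) : R := Rpower (INR n) a.

Definition satisfies_rec (alpha beta : R) (c : nat -> R) (k : nat) (x : nat -> R) : Prop :=
  forall n : nat, (2 <= n)%nat ->
    x n = alpha * x (n / 2)%nat + beta * x ((n + 1) / 2)%nat + poly_eval c k (INR n).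

Definition rd0 (beta : R) (c : nat -> R) (k : nat) (x : nat -> R) : R :=
  (1 - beta) * x 1%nat - poly_eval c k 1 + poly_eval c k 0.
Definition rd1 (beta : R) (c : nat -> R) (k : nat) (x : nat -> R) : R :=
  poly_eval c k 1 - (1 - beta) * x 1%nat.

(* Main.v *)
Require Import Defs.
From Stdlib Require Import Reals Lra Lia ZArith ClassicalEpsilon.
From Coquelicot Require Import Coquelicot.
Open Scope R_scope.


Definition ca (s:R) (c:nat->R) (i:nat) : R :=
  if Req_dec_T s (2^i) then 0 else c i * 2^i / (2^i - s).
Definition cb (s:R) (c:nat->R) (i:nat) : R :=
  if Req_dec_T s (2^i) then c i else 0.
Definition Pt s c i (t:R) := ca s c i * t^i + cb s c i * (t^i * ln t / ln 2).
Definition PP s c k t := sum_f_R0 (fun i => Pt s c i t) k.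
Definition yy a b c k (x:nat->R) n := x n - PP (a+b) c k (INR n).
Definition rt a b c i n :=
  c i * INR n ^ i - Pt (a+b) c i (INR n) + a * Pt (a+b) c i (INR (n/2))
  + b * Pt (a+b) c i (INR ((n+1)/2)).
Definition rr a b c k n := sum_f_R0 (fun i => rt a b c i n) k.

Lemma sum_comb (A B C D : nat -> R) (a b : R) k :
  sum_f_R0 (fun i => A i - B i + a * C i + b * D i) k =
  sum_f_R0 A k - sum_f_R0 B k + a * sum_f_R0 C k + b * sum_f_R0 D k.
Proof. induction k; simpl; [ring| rewrite IHk; ring]. Qed.

Lemma rec_y a b c k x n : satisfies_rec a b c k x -> (2 <= n)%nat ->
  yy a b c k x n = a * yy a b c k x (n/2) + b * yy a b c k x ((n+1)/2) + rr a b c k n.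
Proof.
  intros H Hn. unfold yy. rewrite (H n Hn). unfold rr, rt, PP, poly_eval.
  rewrite sum_comb. ring.
Qed.

Lemma div_e m : ((2*m)/2 = m)%nat.
Proof. symmetry; apply (Nat.div_unique _ _ _ 0); lia. Qed.
Lemma div_o m : ((2*m+1)/2 = m)%nat.
Proof. symmetry; apply (Nat.div_unique _ _ _ 1); lia. Qed.
Lemma div_o2 m : ((2*m+1+1)/2 = m+1)%nat.
Proof. symmetry; apply (Nat.div_unique _ _ _ 0); lia. Qed.

Lemma ln2_pos : 0 < ln 2.
Proof. pose proof ln_lt_2; lra. Qed.

Lemma rt_even a b c i m : (1 <= m)%nat -> rt a b c i (2*m) = 0.
Proof.
  intros Hm. unfold rt. rewrite div_e, div_o.
  assert (Hmp : 0 < INR m) by (apply lt_0_INR; lia).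
  rewrite mult_INR. replace (INR 2) with 2 by (simpl; ring).
  pose proof ln2_pos.
  unfold Pt, ca, cb. destruct (Req_dec_T (a+b) (2^i)) as [e|e].
  - rewrite ln_mult by lra. rewrite Rpow_mult_distr.
    replace b with (2^i - a) by lra. field; lra.
  - rewrite Rpow_mult_distr.
    assert (2^i - (a+b) <> 0) by (intro; apply e; lra).
    field. split; [lra|auto].
Qed.

Lemma pow_diff u v w i : 0 <= u -> 0 <= v -> u <= w -> v <= w ->
  Rabs (u^i - v^i) <= INR i * Rabs (u - v) * w^(i-1).
Proof.
  intros Hu Hv Huw Hvw. induction i.
  - simpl. rewrite Rminus_diag, Rabs_R0. lra.
  - replace (u ^ S i - v ^ S i) with (u * (u^i - v^i) + (u - v) * v^i) by (simpl; ring).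
    eapply Rle_trans; [apply Rabs_triang|].
    rewrite !Rabs_mult. rewrite (Rabs_right u) by lra. rewrite (Rabs_right (v^i)) by (apply Rle_ge, pow_le; lra).
    assert (Hvi : v^i <= w^i) by (apply pow_incr; lra).
    replace (S i - 1)%nat with i by lia. rewrite S_INR.
    destruct i.
    + simpl in *. rewrite Rminus_diag, Rabs_R0. nra.
    + replace (S i - 1)%nat with i in IHi by lia.
      assert (0 <= Rabs (u^S i - v^S i)) by apply Rabs_pos.
      assert (0 <= Rabs (u - v)) by apply Rabs_pos.
      assert (0 <= w^i) by (apply pow_le; lra).
      assert (u * Rabs (u ^ S i - v ^ S i) <= w * (INR (S i) * Rabs (u - v) * w ^ i)).
      { apply Rmult_le_compat; try lra. }
      replace (w^S i) with (w * w^i) by (simpl; ring).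
      assert (Rabs (u - v) * v ^ S i <= Rabs (u-v) * (w * w^i)).
      { apply Rmult_le_compat_l; auto. }
      nra.
Qed.

Lemma ln_le_xm1 x : 0 < x -> ln x <= x - 1.
Proof. intros. pose proof (exp_ineq1_le (ln x)). rewrite exp_ln in H0; lra. Qed.

Lemma ln_diff u v : 0 < v -> v <= u -> 0 <= ln u - ln v <= (u - v) / v.
Proof.
  intros Hv Hvu. split.
  - assert (ln v <= ln u) by (apply ln_le; lra). lra.
  - replace (ln u - ln v) with (ln (u / v)).
    + pose proof (ln_le_xm1 (u/v)). replace ((u-v)/v) with (u/v - 1) by (field; lra).
      apply H. apply Rdiv_lt_0_compat; lra.
    + unfold Rdiv. rewrite ln_mult, ln_Rinv; try lra. apply Rinv_0_lt_compat; lra.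
Qed.

Lemma ln_diff_abs u v m : 0 < m -> m <= u -> m <= v ->
  Rabs (ln u - ln v) <= Rabs (u - v) / m.
Proof.
  intros Hm Hu Hv. destruct (Rle_dec v u).
  - pose proof (ln_diff u v ltac:(lra) r). rewrite Rabs_right by lra.
    rewrite Rabs_right by lra. eapply Rle_trans; [apply H|].
    unfold Rdiv. apply Rmult_le_compat_l; [lra|]. apply Rinv_le_contravar; lra.
  - pose proof (ln_diff v u ltac:(lra) ltac:(lra)). rewrite Rabs_left1 by lra.
    rewrite Rabs_left1 by lra. replace (- (ln u - ln v)) with (ln v - ln u) by ring.
    eapply Rle_trans; [apply H|]. replace (-(u-v)) with (v-u) by ring.
    unfold Rdiv. apply Rmult_le_compat_l; [lra|]. apply Rinv_le_contravar; lra.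
Qed.

Lemma hbound m u i : 1 <= m -> m <= u <= m + 1 -> Rabs (u - (m + /2)) <= /2 ->
  Rabs (u^i * ln u - (m + /2)^i * ln (m + /2)) <=
  INR i / 2 * (m+1)^(i-1) * ln (m+1) + (m+1)^(i-1).
Proof.
  intros Hm Hu Huv. set (v := m + /2) in *.
  replace (u ^ i * ln u - v ^ i * ln v) with ((u^i - v^i) * ln u + v^i * (ln u - ln v)) by ring.
  eapply Rle_trans; [apply Rabs_triang|]. rewrite !Rabs_mult.
  assert (Hlu : 0 <= ln u) by (rewrite <- ln_1; apply ln_le; lra).
  assert (Hlu2 : ln u <= ln (m+1)) by (apply ln_le; lra).
  pose proof (pow_diff u v (m+1) i ltac:(lra) ltac:(unfold v; lra) ltac:(lra) ltac:(unfold v; lra)) as P1.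
  pose proof (ln_diff_abs u v m ltac:(lra) ltac:(lra) ltac:(unfold v; lra)) as P2.
  assert (Hvi : 0 <= v^i <= (m+1)^i) by (split; [apply pow_le; unfold v; lra| apply pow_incr; unfold v; lra]).
  rewrite (Rabs_right (ln u)) by lra. rewrite (Rabs_right (v^i)) by lra.
  assert (HI : 0 <= INR i) by apply pos_INR.
  assert (Hp : 0 <= (m+1)^(i-1)) by (apply pow_le; lra).
  assert (A1 : Rabs (u ^ i - v ^ i) * ln u <= INR i / 2 * (m + 1) ^ (i - 1) * ln (m + 1)).
  { assert (Rabs (u ^ i - v ^ i) <= INR i * /2 * (m+1)^(i-1)).
    { eapply Rle_trans; [apply P1|]. apply Rmult_le_compat_r; [auto|].
      apply Rmult_le_compat_l; auto. }
    assert (0 <= Rabs (u ^ i - v ^ i)) by apply Rabs_pos.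
    replace (INR i / 2 * (m + 1) ^ (i - 1) * ln (m + 1)) with ((INR i * /2 * (m+1)^(i-1)) * ln (m+1)) by (unfold Rdiv; ring).
    apply Rmult_le_compat; auto. }
  assert (A2 : v ^ i * Rabs (ln u - ln v) <= (m+1)^(i-1)).
  { assert (Rabs (ln u - ln v) <= /2 / m).
    { eapply Rle_trans; [apply P2|]. unfold Rdiv. apply Rmult_le_compat_r; auto.
      left; apply Rinv_0_lt_compat; lra. }
    assert (0 <= Rabs (ln u - ln v)) by apply Rabs_pos.
    apply Rle_trans with ((m+1)^i * (/2/m)). { apply Rmult_le_compat; lra. }
    destruct i.
    - simpl. unfold Rdiv. rewrite Rmult_1_l. apply Rle_trans with (/2 * /1).
      + apply Rmult_le_compat_l; [lra|]. apply Rinv_le_contravar; lra.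
      + lra.
    - replace (S i - 1)%nat with i by lia. simpl.
      assert (0 <= (m+1)^i) by (apply pow_le; lra).
      replace ((m + 1) * (m + 1) ^ i * (/ 2 / m)) with ((m+1)^i * ((m+1)/(2*m))) by (field; lra).
      rewrite <- (Rmult_1_r ((m+1)^i)) at 2. apply Rmult_le_compat_l; auto.
      apply Rmult_le_reg_r with (2*m); [lra|]. unfold Rdiv. rewrite Rmult_assoc, Rinv_l by lra. lra. }
  lra.
Qed.

Definition rb a b c i (m:R) :=
  Rabs (ca (a+b) c i) * (a+b) * (INR i / 2) * (m+1)^(i-1) +
  Rabs (cb (a+b) c i) / ln 2 * (a+b) * (INR i / 2 * (m+1)^(i-1) * ln (m+1) + (m+1)^(i-1)).

Lemma rt_odd a b c i m : 0 < a -> 0 < b -> (1 <= m)%nat ->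
  Rabs (rt a b c i (2*m+1)) <= rb a b c i (INR m).
Proof.
  intros Ha Hb Hm. unfold rt, rb. rewrite div_o, div_o2.
  rewrite plus_INR, mult_INR, plus_INR. replace (INR 2) with 2 by (simpl; ring). simpl (INR 1).
  set (M := INR m). assert (HM : 1 <= M) by (unfold M; apply (le_INR 1); lia).
  pose proof ln2_pos.
  replace (2 * M + 1) with (2 * (M + /2)) by field.
  set (w := M + /2).
  assert (HI : 0 <= INR i) by apply pos_INR.
  assert (Hp : 0 <= (M+1)^(i-1)) by (apply pow_le; lra).
  unfold Pt, ca, cb. destruct (Req_dec_T (a+b) (2^i)) as [e|e].
  - replace (c i * (2 * w) ^ i - (0 * (2 * w) ^ i + c i * ((2 * w) ^ i * ln (2 * w) / ln 2)) +
     a * (0 * M ^ i + c i * (M ^ i * ln M / ln 2)) +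
     b * (0 * (M + 1) ^ i + c i * ((M + 1) ^ i * ln (M + 1) / ln 2)))
    with (c i / ln 2 * (a * (M^i * ln M - w^i * ln w) + b * ((M+1)^i * ln (M+1) - w^i * ln w))).
    2:{ rewrite Rpow_mult_distr, ln_mult by (unfold w; lra). rewrite <- e. field. lra. }
    rewrite Rabs_R0, Rmult_0_l, !Rmult_0_l, Rplus_0_l.
    rewrite Rabs_mult. unfold Rdiv at 1. rewrite Rabs_mult, (Rabs_right (/ ln 2)) by (left; apply Rinv_0_lt_compat; lra).
    set (B := INR i / 2 * (M + 1) ^ (i - 1) * ln (M + 1) + (M + 1) ^ (i - 1)).
    assert (H1 : Rabs (M ^ i * ln M - w ^ i * ln w) <= B).
    { apply hbound; try lra. unfold w. rewrite Rabs_left1 by lra. lra. }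
    assert (H2 : Rabs ((M+1) ^ i * ln (M+1) - w ^ i * ln w) <= B).
    { apply hbound; try lra. unfold w. rewrite Rabs_right by lra. lra. }
    assert (Rabs (a * (M ^ i * ln M - w ^ i * ln w) + b * ((M + 1) ^ i * ln (M + 1) - w ^ i * ln w)) <= (a+b) * B).
    { eapply Rle_trans; [apply Rabs_triang|]. rewrite !Rabs_mult, (Rabs_right a), (Rabs_right b) by lra. nra. }
    assert (0 <= Rabs (c i) * / ln 2) by (apply Rmult_le_pos; [apply Rabs_pos| left; apply Rinv_0_lt_compat; lra]).
    unfold Rdiv. apply Rle_trans with (Rabs (c i) * / ln 2 * ((a+b)*B)).
    + apply Rmult_le_compat_l; auto.
    + lra.
  - assert (E : 2^i - (a+b) <> 0) by (intro; apply e; lra).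
    replace (c i * (2 * w) ^ i - (c i * 2 ^ i / (2 ^ i - (a + b)) * (2 * w) ^ i + 0 * ((2 * w) ^ i * ln (2 * w) / ln 2)) +
     a * (c i * 2 ^ i / (2 ^ i - (a + b)) * M ^ i + 0 * (M ^ i * ln M / ln 2)) +
     b * (c i * 2 ^ i / (2 ^ i - (a + b)) * (M + 1) ^ i + 0 * ((M + 1) ^ i * ln (M + 1) / ln 2)))
    with (c i * 2 ^ i / (2 ^ i - (a + b)) * (a * (M^i - w^i) + b * ((M+1)^i - w^i))).
    2:{ rewrite Rpow_mult_distr. field. split; [lra|exact E]. }
    rewrite Rabs_R0. replace (0 / ln 2) with 0 by (unfold Rdiv; ring). rewrite !Rmult_0_l, Rplus_0_r.
    set (C := c i * 2 ^ i / (2 ^ i - (a + b))).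
    rewrite Rabs_mult.
    assert (H1 : Rabs (M^i - w^i) <= INR i / 2 * (M+1)^(i-1)).
    { eapply Rle_trans; [apply (pow_diff _ _ (M+1)); unfold w; lra|].
      unfold w. rewrite Rabs_left1 by lra. replace (- (M - (M + / 2))) with (/2) by field. unfold Rdiv. lra. }
    assert (H2 : Rabs ((M+1)^i - w^i) <= INR i / 2 * (M+1)^(i-1)).
    { eapply Rle_trans; [apply (pow_diff _ _ (M+1)); unfold w; lra|].
      unfold w. rewrite Rabs_right by lra. replace (M + 1 - (M + / 2)) with (/2) by field. unfold Rdiv. lra. }
    assert (Rabs (a * (M ^ i - w ^ i) + b * ((M + 1) ^ i - w ^ i)) <= (a+b) * (INR i / 2 * (M+1)^(i-1))).
    { eapply Rle_trans; [apply Rabs_triang|]. rewrite !Rabs_mult, (Rabs_right a), (Rabs_right b) by lra. nra. }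
    pose proof (Rabs_pos C).
    apply Rle_trans with (Rabs C * ((a + b) * (INR i / 2 * (M + 1) ^ (i - 1)))).
    + apply Rmult_le_compat_l; auto.
    + lra.
Qed.

Lemma rr_even a b c k m : (1 <= m)%nat -> rr a b c k (2*m) = 0.
Proof.
  intros Hm. unfold rr. induction k; cbn [sum_f_R0]; rewrite rt_even; auto. rewrite IHk. ring.
Qed.

Lemma rr_odd a b c k m : 0 < a -> 0 < b -> (1 <= m)%nat ->
  Rabs (rr a b c k (2*m+1)) <= sum_f_R0 (fun i => rb a b c i (INR m)) k.
Proof.
  intros. unfold rr. eapply Rle_trans; [apply sum_f_R0_triangle|].
  apply sum_Rle. intros. apply rt_odd; auto.
Qed.

Definition Wt a b c k i := (Rabs (ca (a+b) c i) * (a+b) * (INR i / 2) +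
   Rabs (cb (a+b) c i) / ln 2 * (a+b) * (INR i / 2 * ln 2 + 1)) * 2^(k-1).

Lemma pow2_nat_R j : INR (2^j) = 2^j.
Proof. rewrite pow_INR. reflexivity. Qed.

Lemma rb_level a b c k i j m : 0 < a -> 0 < b -> (i <= k)%nat ->
  (2^j <= m < 2^(S j))%nat ->
  rb a b c i (INR m) <= Wt a b c k i * (INR j + 1) * (2^(k-1))^j.
Proof.
  intros Ha Hb Hik Hm. unfold rb, Wt.
  pose proof ln2_pos.
  assert (Hm1 : 1 <= INR m + 1 <= 2^(S j)).
  { split. pose proof (pos_INR m); lra.
    rewrite <- pow2_nat_R, <- S_INR. apply le_INR. lia. }
  assert (Q : (INR m + 1)^(i-1) <= 2^(k-1) * (2^(k-1))^j).
  { apply Rle_trans with ((2^(S j))^(i-1)). apply pow_incr; lra.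
    rewrite <- pow_mult. apply Rle_trans with (2^(S j * (k-1))).
    apply Rle_pow; [lra| apply Nat.mul_le_mono_l; lia].
    rewrite <- pow_mult, <- pow_add. apply Req_le. f_equal. lia. }
  assert (Lg : ln (INR m + 1) <= (INR j + 1) * ln 2).
  { apply Rle_trans with (ln (2^(S j))). apply ln_le; lra.
    rewrite ln_pow by lra. rewrite S_INR. lra. }
  assert (Lg0 : 0 <= ln (INR m + 1)) by (rewrite <- ln_1; apply ln_le; lra).
  assert (HJ : 1 <= INR j + 1) by (pose proof (pos_INR j); lra).
  assert (HI : 0 <= INR i) by apply pos_INR.
  set (A := Rabs (ca (a + b) c i)). set (B := Rabs (cb (a + b) c i)).
  assert (0 <= A) by apply Rabs_pos. assert (0 <= B) by apply Rabs_pos.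
  set (X := (INR m + 1) ^ (i - 1)) in *. set (Y := 2 ^ (k - 1) * (2 ^ (k - 1)) ^ j) in *.
  assert (0 <= X) by (apply pow_le; lra).
  assert (HB' : 0 <= B / ln 2 * (a+b)) by (apply Rmult_le_pos; [apply Rmult_le_pos; [auto| left; apply Rinv_0_lt_compat; lra]| lra]).
  assert (0 <= A * (a+b) * (INR i / 2)) by (apply Rmult_le_pos; [apply Rmult_le_pos; lra| lra]).
  replace ((A * (a + b) * (INR i / 2) + B / ln 2 * (a + b) * (INR i / 2 * ln 2 + 1)) * 2 ^ (k - 1) *
      (INR j + 1) * (2 ^ (k - 1)) ^ j) with
     (A * (a + b) * (INR i / 2) * (Y * (INR j + 1)) + B / ln 2 * (a+b) * (INR i / 2 * Y * ((INR j + 1) * ln 2) + Y * (INR j + 1))) by (unfold Y; ring).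
  assert (0 <= Y) by (unfold Y; apply Rmult_le_pos; [apply pow_le; lra| apply pow_le, pow_le; lra]).
  apply Rplus_le_compat.
  - apply Rmult_le_compat_l; auto. nra.
  - apply Rmult_le_compat_l; auto. apply Rplus_le_compat; [|nra].
    apply Rmult_le_compat; try nra.
Qed.

Lemma sum_mult_r (f : nat -> R) z k : sum_f_R0 (fun i => f i * z) k = sum_f_R0 f k * z.
Proof. induction k; simpl; [ring| rewrite IHk; ring]. Qed.

Lemma rr_level a b c k j m : 0 < a -> 0 < b -> (1 <= m)%nat ->
  (2^j <= m < 2^(S j))%nat ->
  Rabs (rr a b c k (2*m+1)) <= sum_f_R0 (Wt a b c k) k * (INR j + 1) * (2^(k-1))^j.
Proof.
  intros. eapply Rle_trans; [apply rr_odd; auto|].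
  apply Rle_trans with (sum_f_R0 (fun i => Wt a b c k i * ((INR j + 1) * (2 ^ (k - 1)) ^ j)) k).
  - apply sum_Rle. intros. rewrite <- Rmult_assoc. apply rb_level; auto.
  - rewrite sum_mult_r. rewrite Rmult_assoc. lra.
Qed.

Definition Vt a b c i := Rabs (ca (a+b) c i) * (a+b) * (INR i / 2) +
   Rabs (cb (a+b) c i) / ln 2 * (a+b) * (INR i / 2 + 1).

Lemma rb_poly a b c k i m : 0 < a -> 0 < b -> (i <= k)%nat ->
  (cb (a+b) c i <> 0 -> (i < k)%nat) -> (1 <= m)%nat ->
  rb a b c i (INR m) <= Vt a b c i * (INR m + 1)^(k-1).
Proof.
  intros Ha Hb Hik Hcb Hm. unfold rb, Vt. pose proof ln2_pos.
  assert (Hm1 : 1 <= INR m + 1) by (pose proof (pos_INR m); lra).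
  assert (Q : (INR m + 1)^(i-1) <= (INR m + 1)^(k-1)) by (apply Rle_pow; [lra|lia]).
  assert (HI : 0 <= INR i) by apply pos_INR.
  set (A := Rabs (ca (a + b) c i)). set (B := Rabs (cb (a + b) c i)).
  assert (0 <= A) by apply Rabs_pos. assert (0 <= B) by apply Rabs_pos.
  assert (0 <= (INR m + 1)^(i-1)) by (apply pow_le; lra).
  assert (HB' : 0 <= B / ln 2 * (a+b)) by (apply Rmult_le_pos; [apply Rmult_le_pos; [auto| left; apply Rinv_0_lt_compat; lra]| lra]).
  assert (0 <= A * (a+b) * (INR i / 2)) by (apply Rmult_le_pos; [apply Rmult_le_pos; lra| lra]).
  assert (L : INR i / 2 * (INR m + 1) ^ (i - 1) * ln (INR m + 1) <= INR i / 2 * (INR m + 1)^(k-1) \/ B = 0).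
  { destruct (Req_dec (cb (a+b) c i) 0) as [E|E].
    - right. unfold B. rewrite E. apply Rabs_R0.
    - left. specialize (Hcb E). destruct i.
      + simpl. lra.
      + replace (S i - 1)%nat with i by lia.
        rewrite !Rmult_assoc. apply Rmult_le_compat_l. { pose proof (pos_INR (S i)); lra. }
        apply Rle_trans with ((INR m + 1)^i * (INR m + 1)).
        * apply Rmult_le_compat_l. apply pow_le; lra. pose proof (ln_le_xm1 (INR m + 1)). lra.
        * replace ((INR m + 1) ^ i * (INR m + 1)) with ((INR m + 1)^(S i)) by (simpl; ring).
          apply Rle_pow; [lra|lia]. }
  set (Z := (INR m + 1)^(k-1)) in *.
  replace ((A * (a + b) * (INR i / 2) + B / ln 2 * (a + b) * (INR i / 2 + 1)) * Z)
    with (A * (a + b) * (INR i / 2) * Z + B / ln 2 * (a + b) * (INR i / 2 * Z + Z)) by ring.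
  apply Rplus_le_compat.
  - apply Rmult_le_compat_l; auto.
  - destruct L as [L|L].
    + apply Rmult_le_compat_l; auto. lra.
    + rewrite L. unfold Rdiv. rewrite !Rmult_0_l. lra.
Qed.

Lemma bern q j : 1 <= q -> 1 + INR j * (q - 1) <= q^j.
Proof.
  intros Hq. induction j.
  - simpl. lra.
  - rewrite S_INR. simpl. assert (0 <= INR j) by apply pos_INR.
    assert (q * (1 + INR j*(q-1)) <= q * q^j) by (apply Rmult_le_compat_l; lra).
    assert (0 <= INR j * ((q-1)*(q-1))) by (apply Rmult_le_pos; nra).
    nra.
Qed.

Lemma grow q : 1 < q -> exists C, 0 < C /\ forall j, INR j + 1 <= C * q^j.
Proof.
  intros Hq. exists (1 + / (q - 1)). split.
  - assert (0 < /(q-1)) by (apply Rinv_0_lt_compat; lra). lra.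
  - intros j. pose proof (bern q j ltac:(lra)).
    assert (0 < /(q-1)) by (apply Rinv_0_lt_compat; lra).
    apply Rle_trans with ((1 + / (q - 1)) * (1 + INR j * (q - 1))).
    + assert (0 <= INR j) by apply pos_INR.
      replace ((1 + / (q - 1)) * (1 + INR j * (q - 1))) with
        (1 + / (q-1) + INR j * (q - 1) + INR j) by (field; lra).
      nra.
    + apply Rmult_le_compat_l; lra.
Qed.

Lemma pow2_gt0 i : 0 < 2^i.
Proof. apply pow_lt; lra. Qed.

Lemma rr_mu a b c k mu : 0 < a -> 0 < b -> 2^(k-1) < mu ->
  exists A, 0 <= A /\ forall j m, (1 <= m)%nat -> (2^j <= m < 2^(S j))%nat ->
    Rabs (rr a b c k (2*m+1)) <= A * mu^j.
Proof.
  intros Ha Hb Hmu.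
  pose proof (pow2_gt0 (k-1)) as H2.
  destruct (grow (mu / 2^(k-1))) as [C [HC HCj]].
  { apply Rmult_lt_reg_r with (2^(k-1)); auto. unfold Rdiv. rewrite Rmult_assoc, Rinv_l by lra. lra. }
  set (W := sum_f_R0 (Wt a b c k) k).
  exists (Rabs W * C). split. { apply Rmult_le_pos; [apply Rabs_pos|lra]. }
  intros j m Hm Hjm. eapply Rle_trans; [apply rr_level; eauto|].
  fold W. assert (0 <= (2^(k-1))^j) by (apply pow_le; lra).
  apply Rle_trans with (Rabs W * (INR j + 1) * (2 ^ (k - 1)) ^ j).
  - apply Rmult_le_compat_r; auto. apply Rmult_le_compat_r. pose proof (pos_INR j); lra.
    apply Rle_abs.
  - replace (mu^j) with ((mu / 2^(k-1))^j * (2^(k-1))^j).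
    2:{ rewrite <- Rpow_mult_distr. f_equal. field. lra. }
    specialize (HCj j). pose proof (Rabs_pos W).
    rewrite !Rmult_assoc. apply Rmult_le_compat_l; auto.
    rewrite <- Rmult_assoc. apply Rmult_le_compat_r; auto.
Qed.

Definition Dy a b c k x n := yy a b c k x (n+1) - yy a b c k x n.

Lemma even_odd n : exists m, n = (2*m)%nat \/ n = (2*m+1)%nat.
Proof.
  destruct (Nat.Even_or_Odd n) as [[m Hm]|[m Hm]]; exists m; lia.
Qed.

Lemma yy_even a b c k x m : satisfies_rec a b c k x -> (1 <= m)%nat ->
  yy a b c k x (2*m) = (a+b) * yy a b c k x m.
Proof.
  intros H Hm. rewrite rec_y by (auto; lia). rewrite div_e.
  replace (2*m+1)%nat with (2*m+1)%nat by lia. rewrite div_o, rr_even by auto. ring.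
Qed.

Lemma yy_odd a b c k x m : satisfies_rec a b c k x -> (1 <= m)%nat ->
  yy a b c k x (2*m+1) = a * yy a b c k x m + b * yy a b c k x (m+1) + rr a b c k (2*m+1).
Proof.
  intros H Hm. rewrite rec_y by (auto; lia). rewrite div_o, div_o2. ring.
Qed.

Lemma Dy_even a b c k x m : satisfies_rec a b c k x -> (1 <= m)%nat ->
  Dy a b c k x (2*m) = b * Dy a b c k x m + rr a b c k (2*m+1).
Proof.
  intros H Hm. unfold Dy. rewrite yy_odd, yy_even by auto. ring.
Qed.

Lemma Dy_odd a b c k x m : satisfies_rec a b c k x -> (1 <= m)%nat ->
  Dy a b c k x (2*m+1) = a * Dy a b c k x m - rr a b c k (2*m+1).
Proof.
  intros H Hm. unfold Dy. replace (2*m+1+1)%nat with (2*(m+1))%nat by lia.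
  rewrite yy_odd, yy_even by (auto; lia). ring.
Qed.

Lemma Dy_level a b c k x mu A : 0 < a -> 0 < b -> satisfies_rec a b c k x ->
  Rmax a b < mu -> 0 <= A ->
  (forall j m, (1 <= m)%nat -> (2^j <= m < 2^(S j))%nat -> Rabs (rr a b c k (2*m+1)) <= A * mu^j) ->
  exists K, 0 <= K /\ forall j n, (2^j <= n < 2^(S j))%nat -> Rabs (Dy a b c k x n) <= K * mu^j.
Proof.
  intros Ha Hb H Hmu HA RB.
  set (mx := Rmax a b) in *.
  assert (Ham : a <= mx) by apply Rmax_l. assert (Hbm : b <= mx) by apply Rmax_r.
  set (K := Rmax (Rabs (Dy a b c k x 1)) (A / (mu - mx))).
  assert (HK1 : Rabs (Dy a b c k x 1) <= K) by apply Rmax_l.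
  assert (HK2 : A / (mu - mx) <= K) by apply Rmax_r.
  assert (HK0 : 0 <= K) by (eapply Rle_trans; [apply Rabs_pos| apply HK1]).
  assert (HKA : A <= K * (mu - mx)).
  { apply Rle_trans with (A / (mu - mx) * (mu - mx)). right; field; lra.
    apply Rmult_le_compat_r; lra. }
  exists K. split; auto.
  induction j; intros n Hn.
  - simpl in Hn. replace n with 1%nat by lia. simpl. lra.
  - destruct (even_odd n) as [m [E|E]]; subst n.
    + assert (Hm : (2^j <= m < 2^(S j))%nat) by (simpl in *; lia).
      assert (1 <= m)%nat by (pose proof (Nat.pow_le_mono_r 2 0 j); simpl in *; lia).
      rewrite Dy_even by auto.
      specialize (IHj m Hm). specialize (RB j m H0 Hm).
      assert (0 <= mu^j) by (apply pow_le; pose proof (Rabs_pos a); unfold mx in *; pose proof (Rmax_l a b); lra).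
      eapply Rle_trans; [apply Rabs_triang|]. rewrite Rabs_mult, (Rabs_right b) by lra.
      change (mu ^ S j) with (mu * mu^j). assert (0 <= (K*(mu-mx) - A) * mu^j) by (apply Rmult_le_pos; lra).
      assert (b * Rabs (Dy a b c k x m) <= mx * (K * mu^j)).
      { apply Rmult_le_compat; try lra. apply Rabs_pos. }
      nra.
    + assert (Hm : (2^j <= m < 2^(S j))%nat) by (simpl in *; lia).
      assert (1 <= m)%nat by (pose proof (Nat.pow_le_mono_r 2 0 j); simpl in *; lia).
      rewrite Dy_odd by auto.
      specialize (IHj m Hm). specialize (RB j m H0 Hm).
      assert (0 <= mu^j) by (apply pow_le; pose proof (Rabs_pos a); unfold mx in *; pose proof (Rmax_l a b); lra).
      unfold Rminus. eapply Rle_trans; [apply Rabs_triang|]. rewrite Rabs_mult, (Rabs_right a), Rabs_Ropp by lra.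
      change (mu ^ S j) with (mu * mu^j). assert (0 <= (K*(mu-mx) - A) * mu^j) by (apply Rmult_le_pos; lra).
      assert (a * Rabs (Dy a b c k x m) <= mx * (K * mu^j)).
      { apply Rmult_le_compat; try lra. apply Rabs_pos. }
      nra.
Qed.

Lemma level_exists n : (1 <= n)%nat -> exists l, (2^l <= n < 2^(S l))%nat.
Proof. intros. exists (Nat.log2 n). apply Nat.log2_spec. lia. Qed.

Lemma level_le l J n : (2^l <= n)%nat -> (n < 2^(S J))%nat -> (l <= J)%nat.
Proof.
  intros H1 H2. destruct (Nat.le_gt_cases l J); auto.
  assert (2^(S J) <= 2^l)%nat by (apply Nat.pow_le_mono_r; lia). lia.
Qed.

Lemma mono_bound (f : nat -> R) K mu : 1 <= mu -> 0 <= K ->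
  (forall j n, (2^j <= n < 2^(S j))%nat -> Rabs (f n) <= K * mu^j) ->
  forall J n, (1 <= n)%nat -> (n < 2^(S J))%nat -> Rabs (f n) <= K * mu^J.
Proof.
  intros Hmu HK Hf J n H1 H2. destruct (level_exists n H1) as [l Hl].
  eapply Rle_trans; [apply (Hf l); auto|]. apply Rmult_le_compat_l; auto.
  apply Rle_pow; auto. apply (level_le l J n); lia.
Qed.

Lemma yy_lvl4 a b c k x V : 0 < a -> 0 < b -> satisfies_rec a b c k x ->
  a + b <= 2^(k-1) -> 0 <= V ->
  (forall m, (1 <= m)%nat -> Rabs (rr a b c k (2*m+1)) <= V * (INR m + 1)^(k-1)) ->
  exists K, 0 <= K /\ forall j n, (2^j <= n <= 2^(S j))%nat ->
    Rabs (yy a b c k x n) <= K * (INR j + 1) * (2^(k-1))^j.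
Proof.
  intros Ha Hb H HS HV RB.
  set (K := Rmax (Rmax (Rabs (yy a b c k x 1)) (Rabs (yy a b c k x 2))) V).
  assert (K1 : Rabs (yy a b c k x 1) <= K) by (unfold K; eapply Rle_trans; [apply Rmax_l| apply Rmax_l]).
  assert (K2 : Rabs (yy a b c k x 2) <= K) by (unfold K; eapply Rle_trans; [apply Rmax_r| apply Rmax_l]).
  assert (K3 : V <= K) by (unfold K; apply Rmax_r).
  exists K. split; [lra|].
  pose proof (pow2_gt0 (k-1)) as P2.
  induction j; intros n Hn.
  - simpl in Hn. simpl. assert (n = 1 \/ n = 2)%nat as [-> | ->] by lia; lra.
  - assert (Hpj : (1 <= 2^j)%nat) by (pose proof (Nat.pow_le_mono_r 2 0 j); simpl in *; lia).
    assert (HZ : 0 <= (2^(k-1))^j) by (apply pow_le; lra).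
    assert (HJ : 0 <= INR j) by apply pos_INR.
    assert (Hstep : forall m, (2^j <= m <= 2^(S j))%nat -> Rabs (yy a b c k x m) <= K * (INR j + 1) * (2^(k-1))^j) by auto.
    rewrite S_INR. replace ((2^(k-1))^(S j)) with (2^(k-1) * (2^(k-1))^j) by (simpl; ring).
    destruct (even_odd n) as [m [E|E]]; subst n.
    + assert (1 <= m)%nat by (simpl in *; lia).
      rewrite yy_even by auto. rewrite Rabs_mult, Rabs_right by lra.
      assert (Rabs (yy a b c k x m) <= K * (INR j + 1) * (2 ^ (k - 1)) ^ j) by (apply Hstep; simpl in *; lia).
      assert (0 <= Rabs (yy a b c k x m)) by apply Rabs_pos.
      assert ((a+b) * Rabs (yy a b c k x m) <= 2^(k-1) * (K * (INR j + 1) * (2 ^ (k - 1)) ^ j)) by (apply Rmult_le_compat; lra).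
      assert (0 <= K * (2^(k-1) * (2^(k-1))^j)) by (apply Rmult_le_pos; [lra| apply Rmult_le_pos; lra]).
      nra.
    + assert (1 <= m)%nat by (simpl in *; lia).
      rewrite yy_odd by auto.
      assert (Y1 : Rabs (yy a b c k x m) <= K * (INR j + 1) * (2 ^ (k - 1)) ^ j) by (apply Hstep; simpl in *; lia).
      assert (Y2 : Rabs (yy a b c k x (m+1)) <= K * (INR j + 1) * (2 ^ (k - 1)) ^ j) by (apply Hstep; simpl in *; lia).
      assert (R1 : Rabs (rr a b c k (2*m+1)) <= V * (2^(k-1) * (2^(k-1))^j)).
      { eapply Rle_trans; [apply RB; auto|]. apply Rmult_le_compat_l; auto.
        rewrite <- pow_mult, <- pow_add. replace ((k-1) + (k-1)*j)%nat with ((S j) * (k-1))%nat by lia.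
        rewrite pow_mult. apply pow_incr. split. pose proof (pos_INR m); lra.
        rewrite <- pow2_nat_R, <- S_INR. apply le_INR. simpl in *; lia. }
      eapply Rle_trans; [apply Rabs_triang|]. eapply Rle_trans; [apply Rplus_le_compat_r; apply Rabs_triang|].
      rewrite !Rabs_mult, (Rabs_right a), (Rabs_right b) by lra.
      assert (a * Rabs (yy a b c k x m) + b * Rabs (yy a b c k x (m+1)) <= (a+b) * (K * (INR j + 1) * (2 ^ (k - 1)) ^ j)).
      { assert (0 <= Rabs (yy a b c k x m)) by apply Rabs_pos. nra. }
      assert (0 <= K * (INR j + 1) * (2 ^ (k - 1)) ^ j) by (apply Rmult_le_pos; [apply Rmult_le_pos; lra|lra]).
      assert ((a+b) * (K * (INR j + 1) * (2 ^ (k - 1)) ^ j) <= 2^(k-1) * (K * (INR j + 1) * (2 ^ (k - 1)) ^ j)) by (apply Rmult_le_compat_r; lra).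
      assert (V * (2^(k-1) * (2^(k-1))^j) <= K * (2^(k-1) * (2^(k-1))^j)) by (apply Rmult_le_compat_r; [apply Rmult_le_pos|]; lra).
      nra.
Qed.

Lemma ln_ge1 n : (3 <= n)%nat -> 1 <= ln (INR n).
Proof.
  intros. rewrite <- (ln_exp 1). apply ln_le. apply exp_pos.
  pose proof exp_le_3. apply Rle_trans with 3; auto. replace 3 with (INR 3) by (simpl; ring). apply le_INR. lia.
Qed.

Lemma lvl_ln n l : (1 <= l)%nat -> (2^l <= n)%nat -> INR l + 1 <= 2 / ln 2 * ln (INR n).
Proof.
  intros Hl Hn. pose proof ln2_pos.
  assert (INR l * ln 2 <= ln (INR n)).
  { rewrite <- ln_pow by lra. apply ln_le. apply pow_lt; lra.
    rewrite <- pow2_nat_R. apply le_INR. auto. }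
  assert (1 <= INR l) by (apply (le_INR 1); auto).
  apply Rle_trans with (2 * INR l). lra.
  apply Rmult_le_reg_r with (ln 2); auto.
  replace (2 / ln 2 * ln (INR n) * ln 2) with (2 * ln (INR n)) by (field; lra). lra.
Qed.

Lemma yy_case4 a b c k x : 0 < a -> 0 < b -> satisfies_rec a b c k x -> (1 <= k)%nat ->
  a + b <= 2^(k-1) ->
  exists C, forall n, (2 <= n)%nat -> Rabs (yy a b c k x n) <= C * (INR n ^ (k-1) * ln (INR n)).
Proof.
  intros Ha Hb H Hk HS.
  set (V := sum_f_R0 (Vt a b c) k).
  assert (RB : forall m, (1 <= m)%nat -> Rabs (rr a b c k (2*m+1)) <= Rabs V * (INR m + 1)^(k-1)).
  { intros m Hm. eapply Rle_trans; [apply rr_odd; auto|].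
    apply Rle_trans with (V * (INR m + 1)^(k-1)).
    - unfold V. rewrite <- sum_mult_r. apply sum_Rle. intros i Hi. apply rb_poly; auto.
      intros Hc. unfold cb in Hc. destruct (Req_dec_T (a+b) (2^i)) as [e|e]; [|congruence].
      destruct (Nat.eq_dec i k); [|lia]. subst i.
      assert (2^(k-1) < 2^k). { replace k with (S (k-1)) at 2 by lia. simpl. pose proof (pow2_gt0 (k-1)); lra. }
      lra.
    - apply Rmult_le_compat_r. apply pow_le. pose proof (pos_INR m); lra. apply Rle_abs. }
  destruct (yy_lvl4 a b c k x (Rabs V) Ha Hb H HS (Rabs_pos V) RB) as [K [HK Hb4]].
  exists (K * (2 / ln 2)). intros n Hn.
  destruct (level_exists n ltac:(lia)) as [l Hl].
  assert (1 <= l)%nat.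
  { destruct l; [simpl in Hl; lia| lia]. }
  eapply Rle_trans; [apply (Hb4 l); lia|].
  pose proof ln2_pos.
  assert (Z : (2^(k-1))^l <= INR n ^ (k-1)).
  { rewrite <- pow_mult, Nat.mul_comm, pow_mult. apply pow_incr. split. apply pow_le; lra.
    rewrite <- pow2_nat_R. apply le_INR. lia. }
  pose proof (lvl_ln n l H0 ltac:(lia)).
  assert (0 <= (2^(k-1))^l) by (apply pow_le; apply pow_le; lra).
  assert (0 <= INR l + 1) by (pose proof (pos_INR l); lra).
  replace (K * (2 / ln 2) * (INR n ^ (k - 1) * ln (INR n))) with (K * ((2 / ln 2 * ln (INR n)) * INR n ^ (k-1))) by ring.
  rewrite Rmult_assoc. apply Rmult_le_compat_l; auto.
  apply Rmult_le_compat; auto.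
Qed.

Lemma floor_unique (N : nat) r : INR N <= r < INR N + 1 -> Z.to_nat (Int_part r) = N.
Proof.
  intros H. rewrite <- (Int_part_spec r (Z.of_nat N)).
  - apply Nat2Z.id.
  - rewrite <- INR_IZR_INZ. lra.
Qed.

Lemma floor_spec r : 0 <= r -> INR (Z.to_nat (Int_part r)) <= r < INR (Z.to_nat (Int_part r)) + 1.
Proof.
  intros Hr. destruct (base_Int_part r) as [H1 H2].
  assert (0 <= Int_part r)%Z.
  { assert (-1 < IZR (Int_part r)) by lra. apply lt_IZR in H. lia. }
  rewrite INR_IZR_INZ, Z2Nat.id by auto. lra.
Qed.

Definition Nf j u := Z.to_nat (Int_part (2^j * u)).

Lemma Nf_spec j u : 0 <= u -> INR (Nf j u) <= 2^j * u < INR (Nf j u) + 1.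
Proof. intros. apply floor_spec. apply Rmult_le_pos; auto. apply pow_le; lra. Qed.

Lemma Nf_S j u : 0 <= u -> Nf (S j) u = (2 * Nf j u)%nat \/ Nf (S j) u = (2 * Nf j u + 1)%nat.
Proof.
  intros Hu. pose proof (Nf_spec j u Hu) as [H1 H2]. unfold Nf at 1.
  replace (2 ^ S j * u) with (2 * (2^j * u)) by (simpl; ring).
  destruct (Rlt_dec (2 * (2^j*u)) (2 * INR (Nf j u) + 1)).
  - left. apply floor_unique. rewrite mult_INR. simpl. lra.
  - right. apply floor_unique. rewrite plus_INR, mult_INR. simpl. lra.
Qed.

Lemma Nf_nat j n : Nf j (INR n) = (2^j * n)%nat.
Proof.
  apply floor_unique. rewrite mult_INR, pow2_nat_R. lra.
Qed.

Lemma Nf_ge1 j u : 1 <= u -> (1 <= Nf j u)%nat.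
Proof.
  intros Hu. pose proof (Nf_spec j u ltac:(lra)) as [H1 H2].
  assert (1 <= 2^j) by (apply pow_R1_Rle; lra).
  assert (1 <= 2^j * u) by nra.
  assert (INR 0 < INR (Nf j u)) by (simpl; lra). apply INR_lt in H3. lia.
Qed.

Lemma Nf_lt j p u : 0 <= u -> u <= 2^p -> (Nf j u < 2^(S (j+p)))%nat.
Proof.
  intros Hu Hp. pose proof (Nf_spec j u Hu) as [H1 H2].
  apply INR_lt. rewrite pow2_nat_R.
  assert (2^j * u <= 2^j * 2^p) by (apply Rmult_le_compat_l; auto; apply pow_le; lra).
  rewrite <- pow_add in H. simpl. pose proof (pow2_gt0 (j+p)). lra.
Qed.

Lemma Nf_close j u w : 0 <= u -> 0 <= w -> Rabs (2^j * u - 2^j * w) < 1 ->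
  Nf j u = Nf j w \/ Nf j u = S (Nf j w) \/ Nf j w = S (Nf j u).
Proof.
  intros Hu Hw H. pose proof (Nf_spec j u Hu). pose proof (Nf_spec j w Hw).
  apply Rabs_def2 in H.
  assert (INR (Nf j u) < INR (Nf j w + 2)) by (rewrite plus_INR; simpl; lra).
  assert (INR (Nf j w) < INR (Nf j u + 2)) by (rewrite plus_INR; simpl; lra).
  apply INR_lt in H2. apply INR_lt in H3. lia.
Qed.

Lemma tele (s : nat -> R) C th : 0 <= th < 1 -> (forall j, Rabs (s (S j) - s j) <= C * th^j) ->
  forall j d, Rabs (s (j + d)%nat - s j) <= C * th^j * (1 - th^d) / (1 - th).
Proof.
  intros Hth H j d. induction d.
  - rewrite Nat.add_0_r, Rminus_diag, Rabs_R0. simpl. unfold Rdiv. rewrite Rminus_diag. lra.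
  - replace (j + S d)%nat with (S (j + d)) by lia.
    replace (s (S (j + d)) - s j) with ((s (S (j+d)) - s (j+d)%nat) + (s (j+d)%nat - s j)) by ring.
    eapply Rle_trans; [apply Rabs_triang|]. specialize (H (j+d)%nat). rewrite pow_add in H.
    replace (C * th ^ j * (1 - th ^ S d) / (1 - th)) with (C * th^j * th^d + C * th ^ j * (1 - th ^ d) / (1 - th))
      by (simpl; field; lra).
    lra.
Qed.

Lemma geom_lim (s : nat -> R) C th : 0 <= th < 1 -> (forall j, Rabs (s (S j) - s j) <= C * th^j) ->
  is_lim_seq s (real (Lim_seq s)) /\ forall j, Rabs (real (Lim_seq s) - s j) <= C * th^j / (1 - th).
Proof.
  intros Hth H.
  assert (HC : 0 <= C) by (specialize (H 0%nat); simpl in H; pose proof (Rabs_pos (s 1%nat - s 0%nat)); lra).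
  assert (B : forall j n, (j <= n)%nat -> Rabs (s n - s j) <= C * th^j / (1 - th)).
  { intros j n Hjn. replace n with (j + (n - j))%nat by lia.
    eapply Rle_trans; [apply (tele s C th Hth H)|].
    unfold Rdiv. apply Rmult_le_compat_r. left; apply Rinv_0_lt_compat; lra.
    assert (0 <= th^(n-j)) by (apply pow_le; lra). assert (0 <= C * th^j) by (apply Rmult_le_pos; auto; apply pow_le; lra).
    nra. }
  assert (Hc : Cauchy_crit s).
  { intros eps Heps.
    destruct (pow_lt_1_zero th ltac:(rewrite Rabs_right; lra) (eps * (1 - th) / (2 * (C + 1)))) as [N HN].
    { apply Rdiv_lt_0_compat; [apply Rmult_lt_0_compat; lra| lra]. }
    exists N. intros n m Hn Hm. unfold R_dist.
    pose proof (B N n Hn). pose proof (B N m Hm).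
    specialize (HN N (le_n N)). rewrite Rabs_right in HN by (apply Rle_ge, pow_le; lra).
    assert (C * th^N / (1 - th) < eps / 2).
    { apply Rmult_lt_reg_r with (1 - th); [lra|]. unfold Rdiv. rewrite Rmult_assoc, Rinv_l by lra.
      apply Rle_lt_trans with ((C + 1) * th^N). { assert (0 <= th^N) by (apply pow_le; lra). nra. }
      apply Rmult_lt_reg_l with (/ (C+1)). apply Rinv_0_lt_compat; lra.
      rewrite <- Rmult_assoc, Rinv_l by lra.
      replace (/ (C + 1) * (eps * / 2 * (1 - th))) with (eps * (1 - th) / (2 * (C + 1))) by (field; lra). lra. }
    replace (s n - s m) with ((s n - s N) - (s m - s N)) by ring.
    eapply Rle_lt_trans; [apply Rabs_triang|]. rewrite Rabs_Ropp. lra. }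
  destruct (Rcomplete.R_complete s Hc) as [l Hl].
  apply is_lim_seq_Reals in Hl. pose proof (is_lim_seq_unique _ _ Hl) as E. rewrite E. simpl.
  split; auto. intros j.
  apply Rnot_lt_le. intros Hlt.
  apply is_lim_seq_Reals in Hl.
  destruct (Hl (Rabs (l - s j) - C * th^j / (1 - th))) as [N HN]. lra.
  specialize (HN (Nat.max N j) ltac:(lia)). unfold R_dist in HN.
  pose proof (B j (Nat.max N j) ltac:(lia)).
  assert (Rabs (l - s j) <= Rabs (s (Nat.max N j) - l) + Rabs (s (Nat.max N j) - s j)).
  { replace (l - s j) with (- (s (Nat.max N j) - l) + (s (Nat.max N j) - s j)) by ring.
    eapply Rle_trans; [apply Rabs_triang|]. rewrite Rabs_Ropp. lra. }
  lra.
Qed.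

Lemma real_mult (s : R) (l : Rbar) : real (Rbar_mult s l) = s * real l.
Proof.
  destruct l; simpl; try reflexivity;
  repeat (destruct (Rle_dec _ _)); try destruct (Rle_lt_or_eq_dec _ _ _); simpl; ring.
Qed.

Lemma exists_pow2 v : exists p : nat, v <= 2^p.
Proof.
  destruct (archimed v) as [H1 H2].
  destruct (Z_le_gt_dec 0 (up v)).
  - exists (Z.to_nat (up v)). pose proof (bern 2 (Z.to_nat (up v)) ltac:(lra)).
    rewrite INR_IZR_INZ, Z2Nat.id in H by auto. lra.
  - exists 0%nat. apply Z.gt_lt in g. apply IZR_lt in g. simpl. lra.
Qed.

Lemma cont_of_derive (f : R -> R) (x : R) : ex_derive f x -> continuity_pt f x.
Proof. intros. apply continuity_pt_filterlim. apply (ex_derive_continuous (K:=R_AbsRing) (V:=R_NormedModule)). auto. Qed.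

Definition tt a b c k x j u := yy a b c k x (Nf j u) / (a+b)^j.
Definition TT a b c k x u := real (Lim_seq (fun j => tt a b c k x j u)).
Definition FF a b c k x u := Rpower u (- log2 (a+b)) * TT a b c k x u.
Definition PhiF a b c k x t := FF a b c k x (Rpower 2 t).

Lemma Rpower_log2 s : 0 < s -> Rpower 2 (log2 s) = s.
Proof.
  intros. unfold Rpower, log2. pose proof ln2_pos.
  replace (ln s / ln 2 * ln 2) with (ln s) by (field; lra). apply exp_ln; auto.
Qed.

Lemma FF_2 a b c k x u : 0 < a + b -> 0 < u -> FF a b c k x (2 * u) = FF a b c k x u.
Proof.
  intros Hs Hu. unfold FF, TT.
  assert (E : forall j, tt a b c k x j (2*u) = (a+b) * tt a b c k x (S j) u).
  { intros j. unfold tt, Nf. replace (2^j * (2*u)) with (2^(S j) * u) by (simpl; ring).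
    simpl. field. split; [apply pow_nonzero|]; lra. }
  rewrite (Lim_seq_ext _ _ E), Lim_seq_scal_l, (Lim_seq_incr_1 (fun j => tt a b c k x j u)), real_mult.
  rewrite <- Rpower_mult_distr by lra. rewrite Rpower_Ropp, Rpower_log2 by auto.
  field. lra.
Qed.

Lemma FF_2e a b c k x e u : 0 < a + b -> 0 < u -> FF a b c k x (2^e * u) = FF a b c k x u.
Proof.
  intros Hs Hu. induction e.
  - simpl. f_equal. ring.
  - replace (2 ^ S e * u) with (2 * (2^e * u)) by (simpl; ring).
    rewrite FF_2; auto. apply Rmult_lt_0_compat; auto. apply pow2_gt0.
Qed.

Lemma yy_pow a b c k x j n : satisfies_rec a b c k x -> (1 <= n)%nat ->
  yy a b c k x (2^j * n) = (a+b)^j * yy a b c k x n.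
Proof.
  intros H Hn. induction j.
  - simpl. rewrite Nat.add_0_r. ring.
  - replace (2^(S j) * n)%nat with (2 * (2^j * n))%nat by (simpl; lia).
    rewrite yy_even; auto. rewrite IHj. simpl. ring.
    pose proof (Nat.pow_le_mono_r 2 0 j). simpl in H0. nia.
Qed.

Lemma FF_nat a b c k x n : 0 < a + b -> satisfies_rec a b c k x -> (1 <= n)%nat ->
  FF a b c k x (INR n) = Rpower (INR n) (- log2 (a+b)) * yy a b c k x n.
Proof.
  intros Hs H Hn. unfold FF, TT. f_equal.
  assert (E : forall j, tt a b c k x j (INR n) = yy a b c k x n).
  { intros j. unfold tt. rewrite Nf_nat, yy_pow by auto. field. apply pow_nonzero; lra. }
  rewrite (Lim_seq_ext _ _ E), Lim_seq_const. reflexivity.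
Qed.

Lemma frac_log2 n : (1 <= n)%nat -> frac (log2 (INR n)) = log2 (INR n) - INR (Nat.log2 n).
Proof.
  intros Hn. set (l := Nat.log2 n). pose proof (Nat.log2_spec n ltac:(lia)) as Hl. fold l in Hl.
  pose proof ln2_pos.
  assert (A1 : INR l * ln 2 <= ln (INR n)).
  { rewrite <- ln_pow by lra. apply ln_le. apply pow_lt; lra. rewrite <- pow2_nat_R. apply le_INR; lia. }
  assert (A2 : ln (INR n) < (INR l + 1) * ln 2).
  { rewrite <- S_INR, <- ln_pow by lra. apply ln_increasing. apply lt_0_INR; lia.
    rewrite <- pow2_nat_R. apply lt_INR; lia. }
  unfold frac. destruct (Int_part_frac_part_spec (log2 (INR n)) (Z.of_nat l) (log2 (INR n) - INR l)) as [_ E].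
  - unfold log2. split.
    + apply Rmult_le_reg_r with (ln 2); auto. unfold Rdiv. rewrite Rmult_minus_distr_r, Rmult_assoc, Rinv_l by lra. lra.
    + apply Rmult_lt_reg_r with (ln 2); auto. unfold Rdiv. rewrite Rmult_minus_distr_r, Rmult_assoc, Rinv_l by lra. lra.
  - rewrite <- INR_IZR_INZ. ring.
  - auto.
Qed.

Lemma tt_step a b c k x mu K A p j u : 0 < a -> 0 < b -> satisfies_rec a b c k x ->
  0 <= K -> 0 <= A -> 1 <= mu ->
  (forall J n, (1 <= n)%nat -> (n < 2^(S J))%nat -> Rabs (Dy a b c k x n) <= K * mu^J) ->
  (forall J m, (1 <= m)%nat -> (m < 2^(S J))%nat -> Rabs (rr a b c k (2*m+1)) <= A * mu^J) ->
  1 <= u <= 2^p ->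
  Rabs (tt a b c k x (S j) u - tt a b c k x j u) <= ((b*K + A) * mu^p / (a+b)) * (mu/(a+b))^j.
Proof.
  intros Ha Hb H HK HA Hmu DG RG Hu.
  assert (Hs : 0 < a + b) by lra.
  assert (Hsj : 0 < (a+b)^j) by (apply pow_lt; lra).
  set (N := Nf j u).
  assert (N1 : (1 <= N)%nat) by (apply Nf_ge1; lra).
  assert (N2 : (N < 2^(S (j+p)))%nat) by (apply Nf_lt; lra).
  assert (E : ((b*K + A) * mu^p / (a+b)) * (mu/(a+b))^j = (b*K + A) * mu^(j+p) / (a+b)^(S j)).
  { unfold Rdiv. rewrite Rpow_mult_distr, pow_inv, pow_add. simpl. field. lra. }
  rewrite E. unfold tt. fold N.
  assert (0 <= mu^(j+p)) by (apply pow_le; lra).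
  assert (0 <= (b * K + A) * mu ^ (j + p) / (a + b) ^ S j).
  { apply Rmult_le_pos. apply Rmult_le_pos; [nra|auto]. left; apply Rinv_0_lt_compat. apply pow_lt; lra. }
  destruct (Nf_S j u ltac:(lra)) as [E2|E2]; rewrite E2; fold N.
  - rewrite yy_even by auto. replace ((a + b) * yy a b c k x N / (a + b) ^ S j - yy a b c k x N / (a + b) ^ j) with 0
      by (simpl; field; lra). rewrite Rabs_R0. auto.
  - rewrite yy_odd by auto.
    replace ((a * yy a b c k x N + b * yy a b c k x (N + 1) + rr a b c k (2 * N + 1)) / (a + b) ^ S j -
       yy a b c k x N / (a + b) ^ j) with ((b * Dy a b c k x N + rr a b c k (2*N+1)) / (a+b)^(S j))
      by (unfold Dy; simpl; field; lra).
    unfold Rdiv. rewrite Rabs_mult, (Rabs_right (/ _)) by (left; apply Rinv_0_lt_compat, pow_lt; lra).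
    apply Rmult_le_compat_r. left; apply Rinv_0_lt_compat, pow_lt; lra.
    eapply Rle_trans; [apply Rabs_triang|]. rewrite Rabs_mult, (Rabs_right b) by lra.
    pose proof (DG (j+p)%nat N N1 N2). pose proof (RG (j+p)%nat N N1 N2).
    assert (b * Rabs (Dy a b c k x N) <= b * (K * mu^(j+p))) by (apply Rmult_le_compat_l; lra).
    nra.
Qed.

Lemma tt_close a b c k x mu K p j u w : 0 < a -> 0 < b -> 0 <= K -> 1 <= mu ->
  (forall J n, (1 <= n)%nat -> (n < 2^(S J))%nat -> Rabs (Dy a b c k x n) <= K * mu^J) ->
  1 <= u <= 2^p -> 1 <= w <= 2^p -> Rabs (2^j * u - 2^j * w) < 1 ->
  Rabs (tt a b c k x j u - tt a b c k x j w) <= K * mu^p * (mu/(a+b))^j.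
Proof.
  intros Ha Hb HK Hmu DG Hu Hw Huw.
  assert (Hsj : 0 < (a+b)^j) by (apply pow_lt; lra).
  assert (E : K * mu^p * (mu/(a+b))^j = K * mu^(j+p) / (a+b)^j).
  { unfold Rdiv. rewrite Rpow_mult_distr, pow_inv, pow_add. field. lra. }
  rewrite E. unfold tt.
  replace (yy a b c k x (Nf j u) / (a + b) ^ j - yy a b c k x (Nf j w) / (a + b) ^ j)
    with ((yy a b c k x (Nf j u) - yy a b c k x (Nf j w)) / (a + b) ^ j) by (field; lra).
  unfold Rdiv. rewrite Rabs_mult, (Rabs_right (/ _)) by (left; apply Rinv_0_lt_compat; lra).
  apply Rmult_le_compat_r. left; apply Rinv_0_lt_compat; lra.
  assert (0 <= mu^(j+p)) by (apply pow_le; lra).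
  pose proof (Nf_ge1 j u ltac:(lra)). pose proof (Nf_ge1 j w ltac:(lra)).
  pose proof (Nf_lt j p u ltac:(lra) ltac:(lra)). pose proof (Nf_lt j p w ltac:(lra) ltac:(lra)).
  destruct (Nf_close j u w ltac:(lra) ltac:(lra) Huw) as [E1|[E1|E1]].
  - rewrite E1, Rminus_diag, Rabs_R0. apply Rmult_le_pos; lra.
  - rewrite E1. replace (S (Nf j w)) with (Nf j w + 1)%nat by lia.
    apply (DG (j+p)%nat); lia.
  - rewrite E1. replace (S (Nf j u)) with (Nf j u + 1)%nat by lia.
    rewrite Rabs_minus_sym. apply (DG (j+p)%nat); lia.
Qed.

Lemma TT_cont a b c k x mu K A v : 0 < a -> 0 < b -> satisfies_rec a b c k x ->
  0 <= K -> 0 <= A -> 1 <= mu -> mu < a + b ->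
  (forall J n, (1 <= n)%nat -> (n < 2^(S J))%nat -> Rabs (Dy a b c k x n) <= K * mu^J) ->
  (forall J m, (1 <= m)%nat -> (m < 2^(S J))%nat -> Rabs (rr a b c k (2*m+1)) <= A * mu^J) ->
  1 < v -> continuity_pt (TT a b c k x) v.
Proof.
  intros Ha Hb H HK HA Hmu Hms DG RG Hv.
  destruct (exists_pow2 (v+1)) as [p Hp].
  set (th := mu / (a+b)).
  assert (Hth : 0 <= th < 1).
  { unfold th. split. apply Rmult_le_pos; [lra| left; apply Rinv_0_lt_compat; lra].
    apply Rmult_lt_reg_r with (a+b); [lra|]. unfold Rdiv. rewrite Rmult_assoc, Rinv_l by lra. lra. }
  set (C1 := (b*K + A) * mu^p / (a+b)).
  assert (Lim : forall u, 1 <= u <= 2^p -> forall j,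
    Rabs (TT a b c k x u - tt a b c k x j u) <= C1 * th^j / (1 - th)).
  { intros u Hu. apply (geom_lim (fun j => tt a b c k x j u) C1 th Hth).
    intros j. apply (tt_step a b c k x mu K A p); auto. }
  set (C2 := K * mu^p).
  set (B1 := C1 / (1 - th)).
  assert (HC1 : 0 <= C1).
  { unfold C1. apply Rmult_le_pos. apply Rmult_le_pos. nra. apply pow_le; lra. left; apply Rinv_0_lt_compat; lra. }
  assert (HB1 : 0 <= B1) by (unfold B1; apply Rmult_le_pos; auto; left; apply Rinv_0_lt_compat; lra).
  assert (HC2 : 0 <= C2) by (unfold C2; apply Rmult_le_pos; auto; apply pow_le; lra).
  unfold continuity_pt, continue_in, limit1_in, limit_in. simpl. unfold Rdist.
  intros eps Heps.
  destruct (pow_lt_1_zero th ltac:(rewrite Rabs_right; lra) (eps / (2*B1 + C2 + 1))) as [N HN].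
  { apply Rdiv_lt_0_compat; lra. }
  specialize (HN N (le_n N)). rewrite Rabs_right in HN by (apply Rle_ge, pow_le; lra).
  assert (H2N : 0 < 2^N) by apply pow2_gt0.
  exists (Rmin (Rmin (v - 1) 1) (/ 2^N)). split.
  { apply Rmin_pos. apply Rmin_pos; lra. apply Rinv_0_lt_compat; lra. }
  intros w [_ Hw].
  assert (Hw1 : Rabs (w - v) < v - 1) by (eapply Rlt_le_trans; [apply Hw|]; eapply Rle_trans; apply Rmin_l).
  assert (Hw2 : Rabs (w - v) < 1) by (eapply Rlt_le_trans; [apply Hw|]; eapply Rle_trans; [apply Rmin_l| apply Rmin_r]).
  assert (Hw3 : Rabs (w - v) < / 2^N) by (eapply Rlt_le_trans; [apply Hw| apply Rmin_r]).
  apply Rabs_def2 in Hw1. apply Rabs_def2 in Hw2.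
  assert (Uw : 1 <= w <= 2^p) by lra. assert (Uv : 1 <= v <= 2^p) by lra.
  assert (Cl : Rabs (2^N * w - 2^N * v) < 1).
  { replace (2^N * w - 2^N * v) with (2^N * (w - v)) by ring. rewrite Rabs_mult, Rabs_right by lra.
    apply Rmult_lt_reg_l with (/ 2^N). apply Rinv_0_lt_compat; lra.
    rewrite <- Rmult_assoc, Rinv_l, Rmult_1_l, Rmult_1_r by lra. auto. }
  pose proof (tt_close a b c k x mu K p N w v Ha Hb HK Hmu DG Uw Uv Cl) as T1. fold th C2 in T1.
  pose proof (Lim w Uw N) as T2. pose proof (Lim v Uv N) as T3.
  replace (TT a b c k x w - TT a b c k x v) with
    ((TT a b c k x w - tt a b c k x N w) + (tt a b c k x N w - tt a b c k x N v) - (TT a b c k x v - tt a b c k x N v)) by ring.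
  unfold Rminus at 1. eapply Rle_lt_trans; [apply Rabs_triang|]. rewrite Rabs_Ropp.
  eapply Rle_lt_trans; [apply Rplus_le_compat_r; apply Rabs_triang|].
  assert (E1 : C1 * th^N / (1 - th) = B1 * th^N) by (unfold B1; field; lra).
  rewrite E1 in T2, T3.
  assert (0 <= th^N) by (apply pow_le; lra).
  assert ((2 * B1 + C2 + 1) * th^N < eps).
  { apply Rmult_lt_reg_l with (/ (2*B1 + C2 + 1)). apply Rinv_0_lt_compat; lra.
    rewrite <- Rmult_assoc, Rinv_l, Rmult_1_l by lra. unfold Rdiv in HN. lra. }
  nra.
Qed.

Lemma main_phi a b c k x : 0 < a -> 0 < b -> satisfies_rec a b c k x ->
  2^(k-1) < a + b ->
  exists Phi, periodic1_cont Phi /\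
    forall n, (1 <= n)%nat -> npow n (log2 (a+b)) * Phi (frac (log2 (INR n))) = yy a b c k x n.
Proof.
  intros Ha Hb H HS.
  assert (Hs : 0 < a + b) by lra.
  set (mx := Rmax a b).
  assert (Hmx : mx < a + b) by (unfold mx; apply Rmax_lub_lt; lra).
  set (mu := (Rmax mx (2^(k-1)) + (a+b)) / 2).
  assert (M1 : mx < mu) by (unfold mu; pose proof (Rmax_l mx (2^(k-1))); lra).
  assert (M2 : 2^(k-1) < mu) by (unfold mu; pose proof (Rmax_r mx (2^(k-1))); lra).
  assert (Rmax mx (2^(k-1)) < a+b) by (apply Rmax_lub_lt; lra).
  assert (M3 : mu < a + b) by (unfold mu; lra).
  assert (M4 : 1 <= mu) by (pose proof (pow_R1_Rle 2 (k-1) ltac:(lra)); lra).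
  destruct (rr_mu a b c k mu Ha Hb M2) as [A [HA RB]].
  destruct (Dy_level a b c k x mu A Ha Hb H M1 HA RB) as [K [HK DL]].
  assert (DG := mono_bound (Dy a b c k x) K mu M4 HK DL).
  assert (RG : forall J m, (1 <= m)%nat -> (m < 2^(S J))%nat -> Rabs (rr a b c k (2*m+1)) <= A * mu^J).
  { apply (mono_bound (fun m => rr a b c k (2*m+1)) A mu M4 HA).
    intros j n Hn. apply RB; auto. pose proof (Nat.pow_le_mono_r 2 0 j). simpl in *; lia. }
  assert (FFc : forall v, 1 < v -> continuity_pt (FF a b c k x) v).
  { intros v Hv. unfold FF.
    change (continuity_pt (mult_fct (fun u => Rpower u (- log2 (a + b))) (TT a b c k x)) v).
    apply continuity_pt_mult.
    - apply cont_of_derive. unfold Rpower. auto_derive. lra.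
    - apply (TT_cont a b c k x mu K A); auto; lra. }
  exists (PhiF a b c k x). split; [split|].
  - intros t0. destruct (exists_pow2 (2 / Rpower 2 t0)) as [e He].
    assert (Hr : 0 < Rpower 2 t0) by (unfold Rpower; apply exp_pos).
    apply continuity_pt_ext with (fun t => FF a b c k x (2^e * Rpower 2 t)).
    { intros t. unfold PhiF. apply FF_2e; auto. unfold Rpower; apply exp_pos. }
    change (continuity_pt (comp (FF a b c k x) (fun t => 2^e * Rpower 2 t)) t0).
    apply continuity_pt_comp.
    + apply cont_of_derive. unfold Rpower. auto_derive. auto.
    + apply FFc. apply Rlt_le_trans with 2; [lra|].
      apply Rmult_le_reg_r with (/ Rpower 2 t0). apply Rinv_0_lt_compat; auto.
      rewrite Rmult_assoc, Rinv_r, Rmult_1_r by lra. auto.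
  - intros t. unfold PhiF. rewrite Rpower_plus, Rpower_1 by lra. rewrite Rmult_comm.
    apply FF_2; auto. unfold Rpower; apply exp_pos.
  - intros n Hn. rewrite frac_log2 by auto. unfold PhiF.
    set (l := Nat.log2 n).
    assert (Hn0 : 0 < INR n) by (apply lt_0_INR; lia).
    assert (E : Rpower 2 (log2 (INR n) - INR l) = INR n / 2^l).
    { unfold Rminus. rewrite Rpower_plus, Rpower_log2, Rpower_Ropp, Rpower_pow by lra. reflexivity. }
    rewrite E. rewrite <- (FF_2e a b c k x l) by (auto; apply Rdiv_lt_0_compat; auto; apply pow2_gt0).
    replace (2 ^ l * (INR n / 2 ^ l)) with (INR n) by (field; apply pow_nonzero; lra).
    rewrite FF_nat by auto. unfold npow. rewrite <- Rmult_assoc, <- Rpower_plus.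
    replace (log2 (a + b) + - log2 (a + b)) with 0 by ring. rewrite Rpower_O by auto. ring.
Qed.

Lemma cb_zero s c i : s <> 2^i -> cb s c i = 0.
Proof. intros. unfold cb. destruct (Req_dec_T s (2^i)); [contradiction|auto]. Qed.
Lemma ca_zero s c i : s = 2^i -> ca s c i = 0.
Proof. intros. unfold ca. destruct (Req_dec_T s (2^i)); [auto|contradiction]. Qed.
Lemma cb_res s c i : s = 2^i -> cb s c i = c i.
Proof. intros. unfold cb. destruct (Req_dec_T s (2^i)); [auto|contradiction]. Qed.

Lemma PP_split s c k t : (1 <= k)%nat -> PP s c k t = PP s c (k-1) t + Pt s c k t.
Proof. intros. unfold PP. replace k with (S (k-1)) at 1 by lia. simpl. replace (S (k-1)) with k by lia. auto. Qed.

Lemma polyb s c d : (forall i, (i <= d)%nat -> cb s c i = 0) ->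
  exists C, 0 <= C /\ forall n, (1 <= n)%nat -> Rabs (PP s c d (INR n)) <= C * INR n ^ d.
Proof.
  intros Hcb. exists (sum_f_R0 (fun i => Rabs (ca s c i)) d). split.
  - apply cond_pos_sum. intros; apply Rabs_pos.
  - intros n Hn. unfold PP. eapply Rle_trans; [apply sum_f_R0_triangle|].
    rewrite <- sum_mult_r. apply sum_Rle. intros i Hi. unfold Pt. rewrite Hcb by auto.
    rewrite Rmult_0_l, Rplus_0_r, Rabs_mult. apply Rmult_le_compat_l. apply Rabs_pos.
    assert (1 <= INR n) by (apply (le_INR 1); auto).
    rewrite Rabs_right by (apply Rle_ge, pow_le; lra). apply Rle_pow; auto.
Qed.

Lemma polyb2 s c d :
  exists C, 0 <= C /\ forall n, (1 <= n)%nat -> Rabs (PP s c d (INR n)) <= C * (INR n ^ d * (1 + ln (INR n))).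
Proof.
  pose proof ln2_pos.
  exists (sum_f_R0 (fun i => Rabs (ca s c i) + Rabs (cb s c i) / ln 2) d). split.
  - apply cond_pos_sum. intros. pose proof (Rabs_pos (ca s c n)). pose proof (Rabs_pos (cb s c n)).
    assert (0 <= Rabs (cb s c n) / ln 2) by (apply Rmult_le_pos; [auto| left; apply Rinv_0_lt_compat; lra]). lra.
  - intros n Hn. unfold PP. eapply Rle_trans; [apply sum_f_R0_triangle|].
    rewrite <- sum_mult_r. apply sum_Rle. intros i Hi. unfold Pt.
    assert (H1 : 1 <= INR n) by (apply (le_INR 1); auto).
    assert (Hl : 0 <= ln (INR n)) by (rewrite <- ln_1; apply ln_le; lra).
    assert (Hp : INR n ^ i <= INR n ^ d) by (apply Rle_pow; auto).
    assert (Hp0 : 0 <= INR n ^ i) by (apply pow_le; lra).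
    pose proof (Rabs_pos (ca s c i)). pose proof (Rabs_pos (cb s c i)).
    eapply Rle_trans; [apply Rabs_triang|]. rewrite !Rabs_mult. unfold Rdiv. rewrite !Rabs_mult.
    rewrite (Rabs_right (INR n ^ i)), (Rabs_right (ln (INR n))), (Rabs_right (/ ln 2)) by
      (try (apply Rle_ge; left; apply Rinv_0_lt_compat; lra); lra).
    assert (0 <= /ln 2) by (left; apply Rinv_0_lt_compat; lra).
    assert (Rabs (ca s c i) * INR n ^ i <= Rabs (ca s c i) * (INR n ^ d * (1 + ln (INR n)))) by
      (apply Rmult_le_compat_l; auto; nra).
    assert (INR n ^ i * ln (INR n) <= INR n ^ d * (1 + ln (INR n))) by nra.
    assert (Rabs (cb s c i) * (INR n ^ i * ln (INR n) * / ln 2) <= Rabs (cb s c i) * / ln 2 * (INR n ^ d * (1 + ln (INR n)))).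
    { replace (Rabs (cb s c i) * (INR n ^ i * ln (INR n) * / ln 2)) with (Rabs (cb s c i) * / ln 2 * (INR n ^ i * ln (INR n))) by ring.
      apply Rmult_le_compat_l; auto. apply Rmult_le_pos; auto. }
    lra.
Qed.

Lemma pow_npow n d e : (1 <= n)%nat -> INR d <= e -> INR n ^ d <= npow n e.
Proof.
  intros Hn Hd. unfold npow. assert (1 <= INR n) by (apply (le_INR 1); auto).
  rewrite <- Rpower_pow by lra. apply Rle_Rpower; auto.
Qed.

Lemma npow_pos n e : 0 <= npow n e.
Proof. unfold npow, Rpower. left; apply exp_pos. Qed.

Lemma log2_ge y j : 2^j <= y -> INR j <= log2 y.
Proof.
  intros H. pose proof ln2_pos. pose proof (pow2_gt0 j). unfold log2.
  apply Rmult_le_reg_r with (ln 2); auto. unfold Rdiv. rewrite Rmult_assoc, Rinv_l by lra. rewrite Rmult_1_r.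
  rewrite <- ln_pow by lra. apply ln_le; auto.
Qed.

Lemma ln_iv n (P : Prop) : (3 <= n)%nat -> 1 <= ln (INR n) ^ iv P.
Proof.
  intros. unfold iv. destruct (excluded_middle_informative P); simpl; [|lra].
  rewrite Rmult_1_r. apply ln_ge1; auto.
Qed.

Lemma iv_nonneg (P : Prop) : 0 <= INR (iv P).
Proof. apply pos_INR. Qed.

Lemma pow_k1 k : (1 <= k)%nat -> 2^k = 2 * 2^(k-1).
Proof. intros. replace k with (S (k-1)) at 1 by lia. simpl. ring. Qed.

Lemma pow_lt_k i k : (i < k)%nat -> 2^i < 2^k.
Proof. intros. apply Rlt_pow; [lra|lia]. Qed.

Lemma const_per C : periodic1_cont (fun _ => C).
Proof. split. apply continuity_const. intros u v; auto. intros; auto. Qed.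

Lemma pow_S_ge l e : 1 <= l -> l <= l ^ S e.
Proof. intros. simpl. pose proof (pow_R1_Rle l e H). nra. Qed.

Theorem mainTheorem4 (alpha beta : R) (c : nat -> R) (k : nat) (x : nat -> R)
  (Ha : 0 < alpha) (Hb : 0 < beta) (Hk : (1 <= k)%nat) (Hck : c k <> 0)
  (Hrec : satisfies_rec alpha beta c k x) :
  let m := Rmax alpha beta in
  let L := log2 (alpha + beta) in
  (* (1a) *)
  (alpha + beta > 2 ^ k -> 2 ^ k > m ->
    exists Phi Psi, periodic1_cont Phi /\ periodic1_cont Psi /\
      bigO (fun n => x n - npow n L * Phi (frac (log2 (INR n)))
                         - INR n ^ k * Psi (frac (log2 (INR n))))
           (fun n => npow n (log2 m))) /\
  (* (1b) *)
  (alpha + beta > 2 ^ k -> m >= 2 ^ k ->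
    exists Phi, periodic1_cont Phi /\
      bigO (fun n => x n - npow n L * Phi (frac (log2 (INR n))))
           (fun n => npow n (log2 m) * ln (INR n) ^ iv (m = 2 ^ k))) /\
  (* (2) *)
  (alpha + beta = 2 ^ k ->
    exists Phi Psi, periodic1_cont Phi /\ periodic1_cont Psi /\
      forall eps, eps > 0 ->
      bigO (fun n => x n - INR n ^ k * ln (INR n) * Phi (frac (log2 (INR n)))
                         - INR n ^ k * Psi (frac (log2 (INR n))))
           (fun n => npow n (log2 m + INR (iv (alpha = beta)) * eps))) /\
  (* (3) *)
  (2 ^ k > alpha + beta -> alpha + beta > 2 ^ (k - 1) ->
    exists Phi Psi, periodic1_cont Phi /\ periodic1_cont Psi /\
      forall eps, eps > 0 ->
      bigO (fun n => x n - INR n ^ k * Phi (frac (log2 (INR n)))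
                         - npow n L * Psi (frac (log2 (INR n))))
           (fun n => npow n (log2 (Rmax m (2 ^ (k - 1)))
                             + INR (iv (m = 2 ^ (k - 1))) * eps)
                     * ln (INR n) ^ iv (m < 2 ^ (k - 1)))) /\
  (* (4) *)
  (2 ^ (k - 1) >= alpha + beta ->
    let E := Nat.add 1 (Nat.mul (iv (alpha + beta = 2 ^ (k - 1)))
               (Nat.add (iv ((2 <= k)%nat /\ c (k - 1)%nat <> 0))
                        (iv (k = 1%nat /\ rd0 beta c k x + rd1 beta c k x <> 0)))) in
    exists Phi, periodic1_cont Phi /\
      bigO (fun n => x n - INR n ^ k * Phi (frac (log2 (INR n))))
           (fun n => INR n ^ (k - 1) * ln (INR n) ^ E)).
Proof.
  intros m L.
  set (s := alpha + beta) in *.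
  assert (Hs : 0 < s) by (unfold s; lra).
  assert (Hm2 : s / 2 <= m) by (unfold m, s; pose proof (Rmax_l alpha beta); pose proof (Rmax_r alpha beta); lra).
  assert (Hm0 : 0 < m) by (unfold m; pose proof (Rmax_l alpha beta); lra).
  assert (Hkk : 2^k = 2 * 2^(k-1)) by (apply pow_k1; auto).
  assert (Hx : forall n, x n = PP s c k (INR n) + yy alpha beta c k x n) by (intros; unfold yy, s; ring).
  assert (Hk1 : INR (k-1) + 1 = INR k) by (rewrite <- S_INR; f_equal; lia).
  pose proof (pow2_gt0 (k-1)) as P1.
  repeat split.
  -
    intros H1 H2.
    assert (Hcb : forall i, (i <= k)%nat -> cb s c i = 0).
    { intros i Hi. apply cb_zero. intro E. assert (2^i <= 2^k) by (apply Rle_pow; [lra|auto]). lra. }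
    destruct (main_phi alpha beta c k x Ha Hb Hrec ltac:(fold s; lra)) as [Phi [HP HPe]].
    exists Phi, (fun _ => ca s c k). split; auto. split; [apply const_per|].
    destruct (polyb s c (k-1) ltac:(intros; apply Hcb; lia)) as [C [HC HCb]].
    exists C, 1%nat. intros n Hn. fold s in HPe. unfold L. rewrite HPe by auto.
    rewrite Hx, (PP_split s c k) by auto. unfold Pt. rewrite (Hcb k) by auto.
    replace (PP s c (k - 1) (INR n) + (ca s c k * INR n ^ k + 0 * (INR n ^ k * ln (INR n) / ln 2)) +
      yy alpha beta c k x n - yy alpha beta c k x n - INR n ^ k * ca s c k) with (PP s c (k-1) (INR n)) by ring.
    eapply Rle_trans; [apply HCb; auto|]. apply Rmult_le_compat_l; auto. apply pow_npow; auto.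
    apply log2_ge. lra.
  -
    intros H1 H2.
    assert (Hcb : forall i, (i <= k)%nat -> cb s c i = 0).
    { intros i Hi. apply cb_zero. intro E. assert (2^i <= 2^k) by (apply Rle_pow; [lra|auto]). lra. }
    destruct (main_phi alpha beta c k x Ha Hb Hrec ltac:(fold s; lra)) as [Phi [HP HPe]].
    exists Phi. split; auto.
    destruct (polyb s c k Hcb) as [C [HC HCb]].
    exists C, 3%nat. intros n Hn. fold s in HPe. unfold L. rewrite HPe by lia.
    rewrite Hx. replace (PP s c k (INR n) + yy alpha beta c k x n - yy alpha beta c k x n) with (PP s c k (INR n)) by ring.
    eapply Rle_trans; [apply HCb; lia|]. apply Rmult_le_compat_l; auto.
    pose proof (ln_iv n (m = 2^k) Hn). pose proof (npow_pos n (log2 m)).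
    apply Rle_trans with (npow n (log2 m)).
    + apply pow_npow; [lia|]. apply log2_ge. lra.
    + nra.
  -
    intros H1.
    assert (Hcb : forall i, (i <= k-1)%nat -> cb s c i = 0).
    { intros i Hi. apply cb_zero. intro E. assert (2^i < 2^k) by (apply pow_lt_k; lia). lra. }
    destruct (main_phi alpha beta c k x Ha Hb Hrec ltac:(fold s; lra)) as [Phi [HP HPe]].
    exists (fun _ => c k / ln 2), Phi. split; [apply const_per|]. split; auto.
    intros eps Heps.
    destruct (polyb s c (k-1) Hcb) as [C [HC HCb]].
    exists C, 1%nat. intros n Hn. fold s in HPe.
    assert (E2 : INR n ^ k * Phi (frac (log2 (INR n))) = yy alpha beta c k x n).
    { rewrite <- HPe by auto. f_equal. unfold npow. rewrite H1.
      replace (log2 (2^k)) with (INR k). rewrite Rpower_pow; auto. apply lt_0_INR; lia.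
      unfold log2. rewrite ln_pow by lra. field. pose proof ln2_pos; lra. }
    rewrite E2, Hx, (PP_split s c k) by auto. unfold Pt. rewrite ca_zero, cb_res by auto.
    replace (PP s c (k - 1) (INR n) + (0 * INR n ^ k + c k * (INR n ^ k * ln (INR n) / ln 2)) +
      yy alpha beta c k x n - INR n ^ k * ln (INR n) * (c k / ln 2) - yy alpha beta c k x n) with (PP s c (k-1) (INR n))
      by (unfold Rdiv; ring).
    eapply Rle_trans; [apply HCb; auto|]. apply Rmult_le_compat_l; auto. apply pow_npow; auto.
    pose proof (log2_ge m (k-1) ltac:(lra)). pose proof (iv_nonneg (alpha = beta)).
    assert (0 <= INR (iv (alpha = beta)) * eps) by (apply Rmult_le_pos; lra). lra.
  -
    intros H1 H2.
    assert (Hcb : forall i, (i <= k)%nat -> cb s c i = 0).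
    { intros i Hi. apply cb_zero. intro E. destruct (Nat.eq_dec i k).
      - subst i. lra.
      - assert (2^i <= 2^(k-1)) by (apply Rle_pow; [lra|lia]). lra. }
    destruct (main_phi alpha beta c k x Ha Hb Hrec ltac:(fold s; lra)) as [Phi [HP HPe]].
    exists (fun _ => ca s c k), Phi. split; [apply const_per|]. split; auto.
    intros eps Heps.
    destruct (polyb s c (k-1) ltac:(intros; apply Hcb; lia)) as [C [HC HCb]].
    exists C, 3%nat. intros n Hn. fold s in HPe. unfold L. rewrite HPe by lia.
    rewrite Hx, (PP_split s c k) by auto. unfold Pt. rewrite (Hcb k) by auto.
    replace (PP s c (k - 1) (INR n) + (ca s c k * INR n ^ k + 0 * (INR n ^ k * ln (INR n) / ln 2)) +
      yy alpha beta c k x n - INR n ^ k * ca s c k - yy alpha beta c k x n) with (PP s c (k-1) (INR n)) by ring.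
    eapply Rle_trans; [apply HCb; lia|]. apply Rmult_le_compat_l; auto.
    pose proof (ln_iv n (m < 2^(k-1)) Hn).
    set (e := log2 (Rmax m (2 ^ (k - 1))) + INR (iv (m = 2 ^ (k - 1))) * eps).
    pose proof (npow_pos n e).
    apply Rle_trans with (npow n e); [|nra].
    apply pow_npow; [lia|]. unfold e.
    pose proof (log2_ge (Rmax m (2^(k-1))) (k-1) (Rmax_r _ _)). pose proof (iv_nonneg (m = 2^(k-1))).
    assert (0 <= INR (iv (m = 2 ^ (k - 1))) * eps) by (apply Rmult_le_pos; lra). lra.
  -
    intros H1 E.
    assert (Hcb : cb s c k = 0).
    { apply cb_zero. intro. lra. }
    exists (fun _ => ca s c k). split; [apply const_per|].
    destruct (polyb2 s c (k-1)) as [C1 [HC1 HCb1]].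
    destruct (yy_case4 alpha beta c k x Ha Hb Hrec Hk ltac:(fold s; lra)) as [C2 HC2].
    exists (2 * C1 + Rabs C2), 3%nat. intros n Hn.
    assert (Hl : 1 <= ln (INR n)) by (apply ln_ge1; auto).
    assert (Hnp : 0 <= INR n ^ (k-1)) by (apply pow_le, pos_INR).
    assert (HE : ln (INR n) <= ln (INR n) ^ E).
    { unfold E. rewrite Nat.add_1_l. apply pow_S_ge. auto. }
    rewrite Hx, (PP_split s c k) by auto. unfold Pt. rewrite Hcb.
    replace (PP s c (k - 1) (INR n) + (ca s c k * INR n ^ k + 0 * (INR n ^ k * ln (INR n) / ln 2)) +
      yy alpha beta c k x n - INR n ^ k * ca s c k) with (PP s c (k-1) (INR n) + yy alpha beta c k x n) by ring.
    eapply Rle_trans; [apply Rabs_triang|].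
    pose proof (HCb1 n ltac:(lia)). pose proof (HC2 n ltac:(lia)).
    assert (Rabs (yy alpha beta c k x n) <= Rabs C2 * (INR n ^ (k - 1) * ln (INR n))).
    { eapply Rle_trans; [apply H0|]. apply Rmult_le_compat_r. nra. apply Rle_abs. }
    assert (C1 * (INR n ^ (k - 1) * (1 + ln (INR n))) <= 2 * C1 * (INR n ^ (k - 1) * ln (INR n))).
    { replace (2 * C1 * (INR n ^ (k - 1) * ln (INR n))) with (C1 * (INR n ^ (k-1) * (2 * ln (INR n)))) by ring.
      apply Rmult_le_compat_l; auto. apply Rmult_le_compat_l; auto. lra. }
    assert (INR n ^ (k - 1) * ln (INR n) <= INR n ^ (k - 1) * ln (INR n) ^ E) by (apply Rmult_le_compat_l; auto).
    pose proof (Rabs_pos C2).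
    assert (0 <= 2 * C1 + Rabs C2) by lra.
    assert ((2 * C1 + Rabs C2) * (INR n ^ (k - 1) * ln (INR n)) <= (2 * C1 + Rabs C2) * (INR n ^ (k - 1) * ln (INR n) ^ E))
      by (apply Rmult_le_compat_l; auto).
    nra.
Qed.
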